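(* Let $q$ be a prime power, let $b\in\mathbb{F}_q[x]$ be a permutation polynomial of $\mathbb{F}_q$, let $n$ be a positive integer, and let $h, k\in\mathbb{F}_q[x]$ be such that $\gcd\left(h(x),\frac{x^n-1}{x-1}\right)=1$ and $k(\mathbb{F}_q)\subseteq\mathbb{F}_q^*$. Then for every polynomial $f\in\mathbb{F}_{q^n}[x]$ with $T_n[f](x)\equiv b(x)-h(1)\cdot k(x)\cdot x\pmod{x^q-x}$, the polynomial $$\mathcal{P}_{b,f,h,k,n}(x)=f(\mathrm{Tr}_{q^n/q}(x))+k(\mathrm{Tr}_{q^n/q}(x))\cdot L_h(x)$$ is a permutation polynomial of $\mathbb{F}_{q^n}$.
   Context: For $u(x)=\sum_{i=0}^m a_i x^i\in\mathbb{F}_q[x]$, its linearized $q$-associate is $L_u(x)=\sum_{i=0}^m a_i x^{q^i}$. $\mathrm{Tr}_{q^n/q}(x)=x+x^q+\cdots+x^{q^{n-1}}$. For $f(x)=\sum_{i=0}^d a_i x^i\in\mathbb{F}_{q^n}[x]$, $T_n[f](x)=\sum_{i=0}^d\mathrm{Tr}_{q^n/q}(a_i)x^i\in\mathbb{F}_q[x]$. A permutation polynomial of a finite field is a polynomial inducing a bijection of it. *)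

(* Defs.v *)
From HB Require Import structures.
From mathcomp Require Import all_boot all_algebra all_field.
Set Implicit Arguments. Unset Strict Implicit. Unset Printing Implicit Defensive.
Import GRing.Theory.
Local Open Scope ring_scope.

Definition trq (L : fieldType) (q n : nat) (x : L) : L :=
  \sum_(i < n) x ^+ (q ^ i).

(* T_n[f] : apply the trace coefficientwise (result viewed in the big field) *)
Definition Tn (L : fieldType) (q n : nat) (f : {poly L}) : {poly L} :=
  \poly_(i < size f) trq q n f`_i.

Definition linq (L : fieldType) (q : nat) (u : {poly L}) (x : L) : L :=
  \sum_(i < size u) u`_i * x ^+ (q ^ i).

(* Main.v *)
Require Import Defs.
From HB Require Import structures.
From mathcomp Require Import all_boot all_algebra all_field.
From mathcomp Require Import all_fingroup all_solvable ring.
Import GRing.Theory.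
Local Open Scope ring_scope.

Section S.
Variables (F L : finFieldType) (iota : {rmorphism F -> L}) (n : nat).
Hypothesis n_gt0 : (0 < n)%N.
Hypothesis cardL : #|L| = (#|F| ^ n)%N.
Local Notation q := #|F|.

Lemma q_gt0 : (0 < q)%N. Proof. by apply: ltnW; apply: finNzRing_gt1. Qed.

Lemma q_nat : [pchar L].-nat q.
Proof.
have [p pr_p chp] := finPcharP F.
have := pprimeChar_pgroup chp.
rewrite /pgroup cardsT => Hp.
have -> : q = #|pPrimeCharType chp| by [].
apply: sub_in_pnat Hp => r _ Hr.
have -> : r = p by move: Hr; rewrite inE => /eqP.
by rewrite (fmorph_pchar iota).
Qed.

Lemma frobD (x y : L) : (x + y) ^+ q = x ^+ q + y ^+ q.
Proof. exact: exprDn_pchar q_nat. Qed.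

Lemma frob0 : (0 : L) ^+ q = 0.
Proof. by rewrite expr0n; case: q q_gt0. Qed.

Lemma frobsum (I : Type) (r : seq I) (P : pred I) (G : I -> L) :
  (\sum_(i <- r | P i) G i) ^+ q = \sum_(i <- r | P i) G i ^+ q.
Proof. exact: (big_morph (fun x : L => x ^+ q) frobD frob0). Qed.

Lemma frobjD j (x y : L) : (x + y) ^+ (q ^ j) = x ^+ (q ^ j) + y ^+ (q ^ j).
Proof.
elim: j => [|j IH]; first by rewrite !expn0 !expr1.
by rewrite expnSr !exprM IH frobD.
Qed.

Lemma frobj0 j : (0 : L) ^+ (q ^ j) = 0.
Proof. by rewrite expr0n expn_eq0; case: q q_gt0. Qed.

Lemma fixj (c : L) j : c ^+ q = c -> c ^+ (q ^ j) = c.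
Proof.
move=> Hc; elim: j => [|j IH]; first by rewrite expn0 expr1.
by rewrite expnSr exprM IH Hc.
Qed.

Lemma iotaq (a : F) : iota a ^+ q = iota a.
Proof. by rewrite -rmorphXn expf_card. Qed.

Lemma fixL (x : L) : x ^+ (q ^ n) = x.
Proof. by rewrite -cardL expf_card. Qed.

Local Notation Tr := (@trq L q n).

Lemma Tr0 : Tr 0 = 0.
Proof. by rewrite /trq big1 // => i _; rewrite frobj0. Qed.

Lemma TrD x y : Tr (x + y) = Tr x + Tr y.
Proof. by rewrite /trq -big_split; apply: eq_bigr => i _; rewrite frobjD. Qed.

Lemma TrZ c x : c ^+ q = c -> Tr (c * x) = c * Tr x.
Proof.
move=> Hc; rewrite /trq mulr_sumr; apply: eq_bigr => i _.
by rewrite exprMn fixj.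
Qed.

Lemma Tr_frob x : Tr (x ^+ q) = Tr x.
Proof.
rewrite /trq; case: n n_gt0 fixL => // m _ fL.
rewrite big_ord_recr big_ord_recl /= -exprM -expnS fL expn0 expr1 addrC.
congr (_ + _); apply: eq_bigr => i _; by rewrite -exprM -expnS.
Qed.

Lemma Tr_fix x : Tr x ^+ q = Tr x.
Proof.
rewrite -{2}(Tr_frob x) /trq frobsum; apply: eq_bigr => i _.
by rewrite -!exprM mulnC.
Qed.

Lemma inK (c : L) : c ^+ q = c -> exists a, c = iota a.
Proof.
move=> Hc.
have := congr1 (map_poly iota) (finField_genPoly F).
rewrite rmorphB /= map_polyXn map_polyX rmorph_prod /= => E.
have : ('X^q - 'X : {poly L}).[c] == 0 by rewrite !hornerE Hc subrr.
rewrite E horner_prod => /prodf_eq0 [a _].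
rewrite map_polyXsubC !hornerE subr_eq0 => /eqP ->; by exists a.
Qed.


Definition Lp (u : {poly F}) (x : L) : L :=
  \sum_(i < size u) iota u`_i * x ^+ (q ^ i).

Lemma Lp_wide N (u : {poly F}) (x : L) : (size u <= N)%N ->
  Lp u x = \sum_(i < N) iota u`_i * x ^+ (q ^ i).
Proof.
move=> le; rewrite /Lp (big_ord_widen N (fun i => iota u`_i * x ^+ (q ^ i))) //.
rewrite big_mkcond; apply: eq_bigr => i _; case: ltnP => // le_i.
by rewrite nth_default // rmorph0 mul0r.
Qed.

Lemma Lp0 (x : L) : Lp 0 x = 0.
Proof. by rewrite /Lp size_poly0 big_ord0. Qed.

Lemma Lp_add (u v : {poly F}) (x : L) : Lp (u + v) x = Lp u x + Lp v x.
Proof.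
set N := maxn (size u) (size v).
rewrite (@Lp_wide N (u + v)) ?size_polyD // (@Lp_wide N u) ?leq_maxl //.
rewrite (@Lp_wide N v) ?leq_maxr // -big_split; apply: eq_bigr => i _.
by rewrite coefD rmorphD mulrDl.
Qed.

Lemma Lp_C (c : F) (x : L) : Lp c%:P x = iota c * x.
Proof.
rewrite (@Lp_wide 1) ?size_polyC ?leq_b1 // big_ord1 coefC /=.
by rewrite expn0 expr1.
Qed.

Lemma Lp_scale (c : F) (u : {poly F}) (x : L) : Lp (c *: u) x = iota c * Lp u x.
Proof.
rewrite (@Lp_wide (size u)) ?size_scale_leq // /Lp mulr_sumr.
by apply: eq_bigr => i _; rewrite coefZ rmorphM mulrA.
Qed.

Lemma Lp_MX (u : {poly F}) (x : L) : Lp (u * 'X) x = (Lp u x) ^+ q.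
Proof.
rewrite (@Lp_wide (size u).+1); last first.
  apply: leq_trans (size_polyMleq _ _) _; rewrite size_polyX addn2 //.
rewrite big_ord_recl coefMX eqxx rmorph0 mul0r add0r /Lp frobsum.
apply: eq_bigr => i _; rewrite coefMX /= exprMn iotaq -exprM expnSr.
by rewrite add0n.
Qed.

Lemma Lp_addx (u : {poly F}) (x y : L) : Lp u (x + y) = Lp u x + Lp u y.
Proof.
rewrite /Lp -big_split; apply: eq_bigr => i _; by rewrite frobjD mulrDr.
Qed.

Lemma Lp_mul (u v : {poly F}) (z : L) : Lp u z = 0 -> Lp (v * u) z = 0.
Proof.
move=> Hu; elim/poly_ind: v => [|p c IH]; first by rewrite mul0r Lp0.
rewrite mulrDl mul_polyC Lp_add Lp_scale Hu mulr0 addr0 mulrAC Lp_MX IH.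
exact: frob0.
Qed.

Lemma Lp_Xn i (z : L) : Lp 'X^i z = z ^+ (q ^ i).
Proof.
elim: i => [|i IH]; first by rewrite expr0 -[1]/(1%:P) Lp_C rmorph1 mul1r expn0 expr1.
by rewrite exprSr Lp_MX IH -exprM expnSr.
Qed.

Lemma Lp_Tr (z : L) : Lp (\sum_(i < n) 'X^i) z = Tr z.
Proof.
rewrite (big_morph (fun u => Lp u z) (fun u v => Lp_add u v z) (Lp0 z)).
by apply: eq_bigr => i _; rewrite Lp_Xn.
Qed.

Lemma Phi_eq : ('X^n - 1) %/ ('X - 1) = \sum_(i < n) 'X^i :> {poly F}.
Proof.
rewrite subrX1 mulrC mulpK //.
by rewrite -[1]/(1%:P) polyXsubC_eq0.
Qed.

Lemma Tr_Lp (u : {poly F}) (x : L) : Tr (Lp u x) = iota u.[1] * Tr x.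
Proof.
elim/poly_ind: u => [|p c IH]; first by rewrite Lp0 Tr0 horner0 rmorph0 mul0r.
rewrite Lp_add Lp_MX Lp_C TrD Tr_frob IH TrZ ?iotaq //.
rewrite !hornerE rmorphD mulrDl; by [].
Qed.

Lemma TnE (f : {poly L}) (c : L) : c ^+ q = c -> (Tn q n f).[c] = Tr f.[c].
Proof.
move=> Hc; rewrite /Tn horner_poly horner_coef.
rewrite [RHS](big_morph Tr TrD Tr0); apply: eq_bigr => i _.
rewrite [in RHS]mulrC TrZ 1?mulrC //.
by rewrite -exprM mulnC exprM Hc.
Qed.

Lemma modpE (p M : {poly L}) (c : L) : M.[c] = 0 -> (p %% M).[c] = p.[c].
Proof.
by move=> HM; rewrite {2}(divp_eq p M) hornerD hornerM HM mulr0 add0r.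
Qed.

Lemma main (b h k : {poly F}) (f : {poly L}) :
  bijective (fun a : F => b.[a]) ->
  coprimep h (('X^n - 1) %/ ('X - 1)) ->
  (forall a : F, k.[a] != 0) ->
  Tn #|F| n f %% ('X^#|F| - 'X)
    = map_poly iota (b - h.[1] *: (k * 'X)) %% ('X^#|F| - 'X) ->
  bijective (fun x : L =>
    f.[trq #|F| n x] + (map_poly iota k).[trq #|F| n x] * linq #|F| (map_poly iota h) x).
Proof.
move=> bij_b cop k0 HT.
have linE x : linq q (map_poly iota h) x = Lp h x.
  rewrite /linq /Lp size_map_poly.
  by apply: eq_bigr => i _; rewrite coef_map.
pose P (x : L) := f.[Tr x] + (map_poly iota k).[Tr x] * linq q (map_poly iota h) x.
change (bijective P).
have TrP x a : Tr x = iota a -> Tr (P x) = iota b.[a].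
  move=> Ha; rewrite /P linE Ha TrD horner_map TrZ ?iotaq // Tr_Lp Ha.
  have Hc : (iota a) ^+ q = iota a by rewrite iotaq.
  have HM : ('X^q - 'X : {poly L}).[iota a] = 0 by rewrite !hornerE Hc subrr.
  rewrite -(TnE f (iota a) Hc) -(modpE (Tn q n f) _ _ HM) HT (modpE _ _ _ HM).
  rewrite horner_map !hornerE !rmorphB !rmorphM /=; ring.
apply: injF_bij => x y Pxy.
have [ax Hx] := inK _ (Tr_fix x).
have [ay Hy] := inK _ (Tr_fix y).
have eab : ax = ay.
  apply: (bij_inj bij_b); apply: (fmorph_inj iota).
  by rewrite -(TrP _ _ Hx) -(TrP _ _ Hy) Pxy.
subst ay.
set z := x - y.
have xE : x = z + y by rewrite /z subrK.
have Trz : Tr z = 0.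
  have : Tr x = Tr y by rewrite Hx Hy.
  by rewrite xE TrD -{2}[Tr y]add0r => /addIr.
have Lz : Lp h z = 0.
  move: Pxy; rewrite /P !linE Hx Hy horner_map => /addrI /mulfI.
  rewrite fmorph_eq0 k0 => /(_ isT).
  by rewrite xE Lp_addx -{2}[Lp h y]add0r => /addIr.
have Lphi : Lp (('X^n - 1) %/ ('X - 1)) z = 0 by rewrite Phi_eq Lp_Tr.
move/Bezout_coprimepP: cop => [[u1 u2] /= /eqpf_eq [c c0 E]].
have : Lp (u1 * h + u2 * (('X^n - 1) %/ ('X - 1))) z = 0.
  by rewrite Lp_add (Lp_mul _ u1 _ Lz) (Lp_mul _ u2 _ Lphi) addr0.
rewrite E alg_polyC Lp_C => /eqP; rewrite mulf_eq0 fmorph_eq0 (negbTE c0) /=.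
by rewrite subr_eq0 => /eqP.
Qed.

End S.

Theorem theorem3p5 (F L : finFieldType) (iota : {rmorphism F -> L}) (n : nat)
    (b h k : {poly F}) (f : {poly L}) :
  (0 < n)%N ->
  #|L| = (#|F| ^ n)%N ->
  bijective (fun a : F => b.[a]) ->
  coprimep h (('X^n - 1) %/ ('X - 1)) ->
  (forall a : F, k.[a] != 0) ->
  Tn #|F| n f %% ('X^#|F| - 'X)
    = map_poly iota (b - h.[1] *: (k * 'X)) %% ('X^#|F| - 'X) ->
  bijective (fun x : L =>
    f.[trq #|F| n x] + (map_poly iota k).[trq #|F| n x] * linq #|F| (map_poly iota h) x).
Proof. move=> n0 cL; exact: main. Qed.
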